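(* Let $\Sigma=(X,U,F)$ be a system, $Q\subset X$ a controlled invariant set with $\sharp Q<\infty$, and $V\subset U$ a finite cover of $Q$ such that: (C.1) $Q_a\cap Q_b=\emptyset$ for all distinct $a,b\in V$; (C.2) for all $a,b\in V$ with $M_{ab}=1$ there exists $K\subset Q_a$ such that $Q_b\subset F(K,a)$; (C.3) $Q_c=\emptyset$ for every $c\in U\setminus V$. Let $\mathcal{A}_V=\{Q_a:a\in V\}$ and $G_V(Q_a)=a$, and suppose $(\mathcal{C},G_{\mathcal{C}})$ is the atom refinement of $(\mathcal{A}_V,G_V)$. Then \[h^{fb}_{inv}(Q)=h_{inv}(\mathcal{C},G_{\mathcal{C}}).\]
   Context: A system is a triple $\Sigma=(X,U,F)$ where $X,U$ are nonempty sets and $F:X\times U\rightrightarrows X$ is a set-valued map with $F(x,u)\neq\emptyset$ for all $(x,u)$; for $A\subset X$, $F(A,u)=\bigcup_{x\in A}F(x,u)$. $Q\subset X$ is controlled invariant if for every $x\in Q$ there is $u\in U$ with $F(x,u)\subset Q$. For $u\in U$ put $Q_u=\{x\in Q:F(x,u)\subset Q\}$. A set $V\subset U$ is a cover of $Q$ if $Q\subset\bigcup_{a\in V}Q_a$; the admissible matrix $M_{Q,V}=(M_{ab})_{a,b\in V}$ has $M_{ab}=1$ if there exists $x\in Q_a$ with $F(x,a)\cap Q_b\neq\emptyset$, and $0$ otherwise. An invariant cover of $Q$ is a pair $(\mathcal{A},G)$ where $\mathcal{A}$ is a finite cover of $Q$ (by subsets of $Q$) and $G:\mathcal{A}\to U$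 satisfies $F(A,G(A))\subset Q$ for all $A\in\mathcal{A}$. For $\mathcal{S}\subset\mathcal{A}^n$, $\alpha=\alpha(0)\cdots\alpha(n-1)\in\mathcal{S}$ and integer $0\le t<n-1$, let $P(\alpha|_{[0,t]})=\{A\in\mathcal{A}:\exists\hat\alpha\in\mathcal{S},\ \hat\alpha|_{[0,t]}=\alpha|_{[0,t]},\ A=\hat\alpha(t+1)\}$, and $P(\alpha|_{[0,n-1]})=P(\alpha)=\{\hat\alpha(0):\hat\alpha\in\mathcal{S}\}$. $\mathcal{S}$ is $(n,Q)$-spanning in $(\mathcal{A},G)$ if (1) the elements of $P(\alpha)$ cover $Q$, and (2) for every $\alpha\in\mathcal{S}$ and $0\le t<n-1$, $F(\alpha(t),G(\alpha(t)))\subset\bigcup_{A'\in P(\alpha|_{[0,t]})}A'$. Let $N(\mathcal{S})=\max_{\alpha\in\mathcal{S}}\prod_{t=0}^{n-1}\sharp P(\alpha|_{[0,t]})$, $r_{inv}(n,Q,\mathcal{A},G)=\min\{N(\mathcal{S}):\mathcal{S}\ (n,Q)\text{-spanning in }(\mathcal{A},G)\}$, $h_{inv}(\mathcal{A},G)=\lim_{n\to\infty}\frac1n\log r_{inv}(n,Q,\mathcal{A},G)$ ($\log$ base $2$), and the invariance feedback entropy $h^{fb}_{inv}(Q)=\inf_{(\mathcal{A},G)}h_{inv}(\mathcal{A},G)$ over all invariant covers of $Q$. A refinement of $(\mathcal{A}_V,G_V)$ is a pair $(\mathcal{B},G_{\mathcal{B}})$ where $\mathcal{B}$ is a cover of $Q$,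 every $B\in\mathcal{B}$ is contained in some $A\in\mathcal{A}_V$, and $G_{\mathcal{B}}(B)=G_V(A)$. A refinement $(\mathcal{C},G_{\mathcal{C}})$ is the atom refinement of $(\mathcal{A}_V,G_V)$ if $\mathcal{C}=\{\{x\}:x\in Q\}$ (so $G_{\mathcal{C}}(\{x\})=a$ for the unique $a\in V$ with $x\in Q_a$) and $\sharp\big(F(x,a)\cap Q_b\big)\le1$ for all $a,b\in V$ and all $x\in Q_a$. *)

(* Defs.v *)
From HB Require Import structures.
From mathcomp Require Import all_boot all_order all_algebra.
From mathcomp Require Import finmap.
From mathcomp Require Import all_classical all_reals.
From mathcomp Require Import topology normedtype sequences exp.
Set Implicit Arguments. Unset Strict Implicit. Unset Printing Implicit Defensive.
Import Order.TTheory GRing.Theory Num.Theory numFieldTopology.Exports numFieldNormedType.Exports.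
Local Open Scope classical_set_scope.
Local Open Scope ring_scope.

Section InvFeedbackEntropy.
Context {X U : Type}.

Definition Fimg (F : X -> U -> set X) (A : set X) (u : U) : set X :=
  \bigcup_(x in A) F x u.

Definition is_system (F : X -> U -> set X) : Prop :=
  forall x u, F x u !=set0.

Definition controlled_invariant (F : X -> U -> set X) (Q : set X) : Prop :=
  forall x, Q x -> exists u, F x u `<=` Q.

Definition Qu (F : X -> U -> set X) (Q : set X) (u : U) : set X :=
  [set x | Q x /\ F x u `<=` Q].

Definition is_cover (F : X -> U -> set X) (Q : set X) (V : set U) : Prop :=
  Q `<=` \bigcup_(a in V) Qu F Q a.

(* entries of the admissible matrix M_{Q,V}: M_ab = 1 *)
Definition Mab (F : X -> U -> set X) (Q : set X) (a b : U) : Prop :=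
  exists x, Qu F Q a x /\ (F x a `&` Qu F Q b) !=set0.

(* invariant cover (A, G) of Q; G is only relevant on elements of A *)
Definition invariant_cover (F : X -> U -> set X) (Q : set X)
  (A : set (set X)) (G : set X -> U) : Prop :=
  [/\ finite_set A,
      (forall B, A B -> B `<=` Q),
      Q `<=` \bigcup_(B in A) B &
      (forall B, A B -> Fimg F B (G B) `<=` Q)].

(* words of length n over A, as sequences; alpha(t) = nth set0 alpha t *)
Definition words (A : set (set X)) (n : nat) : set (seq (set X)) :=
  [set al | size al = n /\ forall t, (t < n)%N -> A (nth set0 al t)].

(* P(alpha|_[0,t]) for t < n-1, and P(alpha|_[0,n-1]) = P(alpha) *)
Definition Pset (S : set (seq (set X))) (n : nat) (al : seq (set X)) (t : nat)
  : set (set X) :=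
  if (t.+1 < n)%N then
    [set B | exists be, S be /\ take t.+1 be = take t.+1 al /\ B = nth set0 be t.+1]
  else [set B | exists be, S be /\ B = nth set0 be 0].

Definition spanning (F : X -> U -> set X) (Q : set X)
  (A : set (set X)) (G : set X -> U) (n : nat) (S : set (seq (set X))) : Prop :=
  [/\ S `<=` words A n,
      Q `<=` \bigcup_(B in Pset S n [::] n.-1) B &
      (forall al, S al -> forall t, (t.+1 < n)%N ->
         Fimg F (nth set0 al t) (G (nth set0 al t))
           `<=` \bigcup_(B in Pset S n al t) B)].

Definition NS (S : set (seq (set X))) (n : nat) : nat :=
  \max_(al <- fset_set S) \prod_(t < n) #|` fset_set (Pset S n al t)|.

Variable R : realType.

Definition r_inv (F : X -> U -> set X) (Q : set X)
  (A : set (set X)) (G : set X -> U) (n : nat) : R :=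
  inf [set (NS S n)%:R | S in spanning F Q A G n].

Definition log2 (x : R) : R := ln x / ln 2.

Definition h_inv (F : X -> U -> set X) (Q : set X)
  (A : set (set X)) (G : set X -> U) : R :=
  limn (fun n : nat => log2 (r_inv F Q A G n) / n%:R).

Definition h_fb_inv (F : X -> U -> set X) (Q : set X) : R :=
  inf [set h_inv F Q AG.1 AG.2 | AG in [set AG | invariant_cover F Q AG.1 AG.2]].

Definition atom_refinement (F : X -> U -> set X) (Q : set X) (V : set U)
  (C : set (set X)) (GC : set X -> U) : Prop :=
  [/\ C = [set [set x] | x in Q],
      (forall x, Q x -> V (GC [set x]) /\ Qu F Q (GC [set x]) x) &
      (forall a b x, V a -> V b -> Qu F Q a x ->
         forall y z, (F x a `&` Qu F Q b) y -> (F x a `&` Qu F Q b) z -> y = z)].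

End InvFeedbackEntropy.

(* Main.v *)
Require Import Defs.
From HB Require Import structures.
From mathcomp Require Import all_boot all_order all_algebra.
From mathcomp Require Import finmap.
From mathcomp Require Import all_classical all_reals.
From mathcomp Require Import topology normedtype sequences exp.
From mathcomp Require Import zify ring lra.
Set Implicit Arguments. Unset Strict Implicit. Unset Printing Implicit Defensive.
Import Order.TTheory GRing.Theory Num.Theory numFieldTopology.Exports numFieldNormedType.Exports.
Local Open Scope classical_set_scope.
Local Open Scope ring_scope.
Lemma prod_split (f g1 g2 : nat -> nat) n1 m1 :
  (forall t, (t < n1)%N -> (f t <= g1 t)%N) -> (f n1 <= g2 m1)%N ->
  (forall t, (t < m1)%N -> (f (n1.+1 + t) <= g2 t)%N) ->
  (f (n1.+1 + m1) <= g1 n1)%N ->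
  (\prod_(t < n1.+1 + m1.+1) f t <= (\prod_(t < n1.+1) g1 t) * \prod_(t < m1.+1) g2 t)%N.
Proof.
move=> h1 h2 h3 h4.
rewrite big_split_ord /= !big_ord_recr /=.
have -> : (\prod_(i < n1) g1 i * g1 n1 * (\prod_(i < m1) g2 i * g2 m1) =
   \prod_(i < n1) g1 i * g2 m1 * (\prod_(i < m1) g2 i * g1 n1))%N by ring.
apply: leq_mul; apply: leq_mul => //; apply: leq_prod => i _ /=.
  exact: h1.
exact: h3.
Qed.
Section Fek.
Variable R : realType.



Lemma fek_decomp (b : nat -> R) (k : nat) : (0 < k)%N ->
  (forall n, 0 <= b n) ->
  (forall n m, (0 < n)%N -> (0 < m)%N -> b (n + m)%N <= b n + b m) ->
  forall q s, b (q * k + s)%N <= q%:R * b k + b s.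
Proof.
move=> k0 b0 bsub; elim=> [|q IH] s; first by rewrite mul0n add0n mul0r add0r.
rewrite mulSn -addnA mulrS.
have [qs0|qs0] := eqVneq (q * k + s)%N 0%N.
  have s0 : s = 0%N by move: qs0; case: s => // s; rewrite addnS.
  have q0 : (q * k = 0)%N by rewrite -qs0 s0 addn0.
  rewrite qs0 addn0 s0.
  have := b0 0%N; have : 0 <= q%:R * b k :> R by apply: mulr_ge0 => //.
  move=> *; lra.
have := bsub k (q * k + s)%N k0; rewrite lt0n qs0 => /(_ isT) H.
have := IH s; move=> *; lra.
Qed.



Lemma fekete (b : nat -> R) :
  (forall n, 0 <= b n) ->
  (forall n m, (0 < n)%N -> (0 < m)%N -> b (n + m)%N <= b n + b m) ->
  cvgn (fun n => b n / n%:R).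
Proof.
move=> b0 bsub.
set E := [set b n / n%:R | n in [set n | (0 < n)%N]].
have E0 : E !=set0 by exists (b 1%N / 1%:R); exists 1%N.
have Elb : lbound E 0 by move=> _ [n _ <-]; rewrite divr_ge0.
have hinf : has_inf E by split => //; exists 0.
apply/cvg_ex; exists (inf E); apply/cvgrPdist_le => e e0.
have e20 : 0 < e / 2 by rewrite divr_gt0.
have [_ [k k0 <-] xlt] := inf_adherent e20 hinf.
set M := \sum_(s < k) b s.
have M0 : 0 <= M by rewrite sumr_ge0.
set N := Num.Def.archi_bound (M / (e / 2)).
have HN := @archi_boundP _ (M / (e / 2)) (divr_ge0 M0 (ltW e20)).
exists N.+1 => // n /= Hn.
have n0 : (0 < n)%N by apply: leq_ltn_trans Hn.
have n0R : 0 < n%:R :> R by rewrite ltr0n.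
have k0R : 0 < k%:R :> R by rewrite ltr0n.
have Ln : inf E <= b n / n%:R by apply: (ge_inf (ex_intro _ 0 Elb)); exists n.
have bnk : b n <= (n %/ k)%N%:R * b k + b (n %% k)%N.
  by rewrite {1}(div.divn_eq n k); apply: fek_decomp.
have bmod : b (n %% k)%N <= M.
  rewrite /M (bigD1 (Ordinal (ltn_pmod n k0) : 'I_k)) //= lerDl sumr_ge0 //.
have hq : (n %/ k)%N%:R * b k <= n%:R * (b k / k%:R).
  have -> : (n %/ k)%N%:R * b k = ((n %/ k)%N * k)%N%:R * (b k / k%:R).
    by rewrite natrM -[RHS]mulrA [k%:R * _]mulrC divfK // gt_eqF.
  by apply: ler_wpM2r; [rewrite divr_ge0 | rewrite ler_nat leq_trunc_div].
have hM : M <= n%:R * (e / 2).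
  have : M / (e / 2) < n%:R.
    by apply: (lt_trans HN); rewrite ltr_nat; apply: leq_trans Hn.
  by rewrite ltr_pdivrMr // => /ltW; rewrite mulrC.
have up : b n / n%:R <= b k / k%:R + e / 2.
  rewrite ler_pdivrMr // mulrDl; rewrite [_ * n%:R]mulrC [(e/2) * _]mulrC.
  lra.
rewrite ler_norml; apply/andP; split; lra.
Qed.

End Fek.
Section Infra.
Context {X U : Type}.
Local Open Scope nat_scope.
Implicit Types (F : X -> U -> set X) (Q : set X) (A : set (set X)) (G : set X -> U).

Lemma words_fin A n : finite_set A -> finite_set (words A n).
Proof.
move=> fA; elim: n => [|n IH].
  apply: (@sub_finite_set _ _ [set [::]]); last exact: finite_set1.
  by move=> al [/size0nil -> _].
apply: (@sub_finite_set _ _ [set p.1 :: p.2 | p in A `*` words A n]).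
  move=> [|x al] [//= [sz] h]; exists (x, al) => //; split => /=.
    exact: (h 0%N).
  by split => // t tn; apply: (h t.+1).
by apply: finite_image; apply: finite_setX.
Qed.

Lemma Pset_words A S n al t : S `<=` words A n -> (0 < n)%N ->
  Pset S n al t `<=` A.
Proof.
move=> Ssub n0; rewrite /Pset; case: ifP => h B.
  by move=> [be [/Ssub [_ hb] [_ ->]]]; apply: hb.
by move=> [be [/Ssub [_ hb] ->]]; apply: hb.
Qed.

Lemma card_sub (T : choiceType) (B C : set T) : finite_set C -> B `<=` C ->
  (#|` fset_set B| <= #|` fset_set C|)%N.
Proof.
move=> fC BC; apply: fsubset_leq_card.
by rewrite -fset_set_sub //; apply: sub_finite_set fC.
Qed.

Lemma card_inj (T T' : choiceType) (B : set T) (C : set T') (f : T -> T') :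
  finite_set B -> finite_set C -> {in B &, injective f} -> f @` B `<=` C ->
  (#|` fset_set B| <= #|` fset_set C|)%N.
Proof.
move=> fB fC inj sub; apply: leq_trans (card_sub fC sub).
rewrite fset_set_image //.
have /card_in_imfsetP/eqP -> // : {in fset_set B &, injective f}.
by move=> x y; rewrite !in_fset_set // => xB yB; apply: inj.
Qed.

Lemma ns_ge A S n al : S `<=` words A n -> finite_set A -> S al ->
  (\prod_(t < n) #|` fset_set (Pset S n al t)| <= NS S n)%N.
Proof.
move=> Ssub fA Sal; rewrite /NS.
apply: (@leq_bigmax_seq _ _ xpredT (fun al => \prod_(t < n) #|` fset_set (Pset S n al t)|)%N al) => //.
by rewrite in_fset_set ?inE //; apply: sub_finite_set (words_fin n fA).
Qed.

Lemma ns_le A S n m : S `<=` words A n -> finite_set A ->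
  (forall al, S al -> \prod_(t < n) #|` fset_set (Pset S n al t)| <= m)%N ->
  (NS S n <= m)%N.
Proof.
move=> Ssub fA h; rewrite /NS; apply/bigmax_leqP_seq => al.
rewrite in_fset_set ?inE //; last by apply: sub_finite_set (words_fin n fA).
by move=> Sal _; apply: h.
Qed.

Lemma inf_min (R : realType) (E : set R) x : E x -> lbound E x -> inf E = x.
Proof.
move=> Ex lb; apply/eqP; rewrite eq_le; apply/andP; split.
  by apply: (ge_inf (ex_intro _ x lb)).
by apply: lb_le_inf => //; exists x.
Qed.

Lemma rinv_spec (R : realType) F Q A G n :
  (exists S, spanning F Q A G n S) ->
  exists S0, [/\ spanning F Q A G n S0, r_inv R F Q A G n = (NS S0 n)%:R%R &
    forall S, spanning F Q A G n S -> (NS S0 n <= NS S n)%N].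
Proof.
move=> exS.
pose P := fun k : nat => `[< exists S, spanning F Q A G n S /\ NS S n = k >].
have exP : exists k, P k.
  by case: exS => S sp; exists (NS S n); apply/asboolP; exists S.
case: (ex_minnP exP) => k /asboolP [S0 [sp0 e0]] hmin.
exists S0; split => //; last first.
  by move=> S sp; rewrite e0; apply: hmin; apply/asboolP; exists S.
rewrite /r_inv; apply: inf_min; first by exists S0.
move=> _ [S sp <-]; rewrite ler_nat e0; apply: hmin; apply/asboolP; by exists S.
Qed.

End Infra.
Section Span.
Context {X U : Type}.
Local Open Scope nat_scope.
Variables (F : X -> U -> set X) (Q : set X) (A : set (set X)) (G : set X -> U).
Hypothesis cov : invariant_cover F Q A G.

Lemma words_spanning n : (0 < n)%N -> spanning F Q A G n (words A n).
Proof.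
move=> n0; case: cov => fA AQ QA FA.
split => //.
- move=> x Qx; have [B AB Bx] := QA x Qx; exists B => //.
  rewrite /Pset prednK // ltnn; exists (nseq n B); split; last by rewrite nth_nseq n0.
  by split; [rewrite size_nseq | move=> t tn; rewrite nth_nseq tn].
- move=> al [sz hal] t tn y Fy.
  have Qy := FA _ (hal t (ltnW tn)) y Fy.
  have [B AB By] := QA y Qy; exists B => //.
  have szt : size (take t.+1 al) = t.+1 by rewrite size_takel // sz ltnW.
  rewrite /Pset tn; exists (take t.+1 al ++ nseq (n - t.+1) B); split.
  + split; first by rewrite size_cat szt size_nseq subnKC // ltnW.
    move=> s sn; rewrite nth_cat szt; case: ifP => st.
      by rewrite nth_take //; apply: hal.
    rewrite nth_nseq; case: ifP => // /negbT; rewrite -leqNgt => h.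
    by exfalso; move/negbT: st; move: h sn; lia.
  + by split; [rewrite take_size_cat | rewrite nth_cat szt ltnn subnn nth_nseq subn_gt0 tn].
Qed.

Lemma exists_spanning n : (0 < n)%N -> exists S, spanning F Q A G n S.
Proof. by move=> n0; exists (words A n); apply: words_spanning. Qed.

End Span.
Section Cat.
Context {X U : Type}.
Local Open Scope nat_scope.
Variables (F : X -> U -> set X) (Q : set X) (A : set (set X)) (G : set X -> U).
Hypothesis cov : invariant_cover F Q A G.

Definition catS (S1 S2 : set (seq (set X))) : set (seq (set X)) :=
  [set al | exists a b, [/\ S1 a, S2 b & al = a ++ b]].

Lemma catS_span n m S1 S2 : (0 < n)%N -> (0 < m)%N ->
  spanning F Q A G n S1 -> spanning F Q A G m S2 ->
  spanning F Q A G (n + m) (catS S1 S2).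
Proof.
move=> n0 m0 [W1 C1 T1] [W2 C2 T2].
have sz1 a : S1 a -> size a = n by move=> /W1 [].
have sz2 b : S2 b -> size b = m by move=> /W2 [].
case: cov => fA AQ QA FA.
split.
- move=> _ [a [b [Sa Sb ->]]]; split; first by rewrite size_cat sz1 // sz2.
  move=> t tn; rewrite nth_cat sz1 //; case: ifP => tn'; first by apply: (W1 a Sa).2.
  apply: (W2 b Sb).2; move/negbT: tn'; move: tn; lia.
- move=> x Qx; have [B PB Bx] := C1 x Qx; have [B' PB' _] := C2 x Qx.
  move: PB PB'; rewrite /Pset !prednK ?addn_gt0 ?n0 // !ltnn.
  move=> [a [Sa eB]] [b [Sb _]]; exists (nth set0 a 0); first last.
    by rewrite -eB.
  exists (a ++ b); split; first by exists a, b.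
  by rewrite nth_cat sz1 // n0.
- move=> _ [a [b [Sa Sb ->]]] t tnm y Fy.
  rewrite /Pset tnm.
  case: (ltngtP t.+1 n) => [tn | nt | tn].
  + rewrite nth_cat sz1 // (ltnW tn) in Fy.
    have [B PB By] := T1 a Sa t tn y Fy; exists B => //.
    move: PB; rewrite /Pset tn => -[a' [Sa' [ht eB]]]; subst B.
    exists (a' ++ b); split; first by exists a', b.
    by rewrite !takel_cat ?sz1 ?(ltnW tn) // nth_cat sz1 // tn.
  + have tn' : (t < n)%N = false by apply/negbTE; rewrite -leqNgt.
    rewrite nth_cat sz1 // tn' in Fy.
    have tm : ((t - n).+1 < m)%N by move: nt tnm; lia.
    have [B PB By] := T2 b Sb (t - n)%N tm y Fy; exists B => //.
    move: PB; rewrite /Pset tm => -[b' [Sb' [ht eB]]]; subst B.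
    exists (a ++ b'); split; first by exists a, b'.
    have nt' : n <= t by rewrite -ltnS.
    have ntF : (t.+1 < n) = false by apply/negbTE; rewrite -leqNgt leqW.
    rewrite !take_cat !sz1 // ntF subSn // ht; split => //.
    by rewrite nth_cat sz1 // ntF subSn.
  + have tn' : (t < n)%N by rewrite -tn.
    rewrite nth_cat sz1 // tn' in Fy.
    have Qy := FA _ ((W1 a Sa).2 t tn') y Fy.
    have [B PB By] := C2 y Qy; exists B => //.
    move: PB; rewrite /Pset prednK // ltnn => -[b' [Sb' eB]]; subst B.
    exists (a ++ b'); split; first by exists a, b'.
    rewrite !take_size_cat ?sz1 //; split => //.
    by rewrite nth_cat sz1 // -tn ltnn subnn.
Qed.


Lemma catS_ns n m S1 S2 : (0 < n)%N -> (0 < m)%N ->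
  spanning F Q A G n S1 -> spanning F Q A G m S2 ->
  (NS (catS S1 S2) (n + m) <= NS S1 n * NS S2 m)%N.
Proof.
move=> n0 m0 sp1 sp2.
have [W _ _] := catS_span n0 m0 sp1 sp2.
case: (sp1) (sp2) => [W1 C1 T1] [W2 C2 T2].
have sz1 a : S1 a -> size a = n by move=> /W1 [].
have sz2 b : S2 b -> size b = m by move=> /W2 [].
have fA : finite_set A by case: cov.
apply: (ns_le W fA) => _ [a [b [Sa Sb ->]]].
apply: leq_trans (leq_mul (ns_ge W1 fA Sa) (ns_ge W2 fA Sb)).
have fP1 t : finite_set (Pset S1 n a t) by apply: sub_finite_set (Pset_words (al:=a) (t:=t) W1 n0) fA.
have fP2 t : finite_set (Pset S2 m b t) by apply: sub_finite_set (Pset_words (al:=b) (t:=t) W2 m0) fA.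
move: n0 m0 sp1 sp2 W W1 C1 T1 W2 C2 T2 sz1 sz2 Sa Sb fP1 fP2.
case: n => // n1; case: m => // m1 => _ _ sp1 sp2 W W1 C1 T1 W2 C2 T2 sz1 sz2 Sa Sb fP1 fP2.
apply: (prod_split
  (f := fun t => #|` fset_set (Pset (catS S1 S2) (n1.+1 + m1.+1) (a ++ b) t)|)
  (g1 := fun t => #|` fset_set (Pset S1 n1.+1 a t)|)
  (g2 := fun t => #|` fset_set (Pset S2 m1.+1 b t)|)).
- move=> t tn; apply: card_sub => //.
  rewrite /Pset ltnS tn; have -> : (t.+1 < n1.+1 + m1.+1) by lia.
  move=> B [_ [[a' [b' [Sa' Sb' ->]]] [ht eB]]]; subst B.
  move: ht; rewrite !takel_cat ?sz1 ?ltnS ?(ltnW tn) // => ht.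
  exists a'; split => //; split => //.
  by rewrite nth_cat sz1 // ltnS tn.
- apply: card_sub => //.
  rewrite /Pset /= ltnn; have -> : (n1.+1 < n1.+1 + m1.+1) by lia.
  move=> B [_ [[a' [b' [Sa' Sb' ->]]] [ht eB]]]; subst B.
  exists b'; split => //.
  by rewrite nth_cat sz1 // ltnn subnn.
- move=> t tm; apply: card_sub => //.
  rewrite /Pset ltnS tm; have -> : ((n1.+1 + t).+1 < n1.+1 + m1.+1) by lia.
  move=> B [_ [[a' [b' [Sa' Sb' ->]]] [ht eB]]]; subst B.
  move: ht; rewrite -!addnS !take_cat !sz1 // !ltnNge leq_addr /= addKn => /eqP.
  rewrite eqseq_cat ?sz1 // => /andP [_ /eqP ht].
  exists b'; split => //; split => //.
  by rewrite nth_cat sz1 // ltnNge leq_addr /= addKn.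
- apply: card_sub => //.
  rewrite /Pset /= ltnn; have -> : ((n1.+1 + m1).+1 < n1.+1 + m1.+1) = false by lia.
  move=> B [_ [[a' [b' [Sa' Sb' ->]]] eB]]; subst B.
  exists a'; split => //.
  by rewrite nth_cat sz1.
Qed.

End Cat.
Section Log.
Variable R : realType.

Lemma log2_ge0 (k : nat) : 0 <= log2 (k%:R : R).
Proof.
rewrite /log2; apply: divr_ge0; last by apply: ln_ge0; rewrite ler1n.
case: k => [|k]; first by rewrite ln0.
by apply: ln_ge0; rewrite ler1n.
Qed.

Lemma log2_sub (a b c : nat) : (a <= b * c)%N ->
  log2 (a%:R : R) <= log2 (b%:R : R) + log2 (c%:R : R).
Proof.
move=> h; case: a h => [|a] h.
  by rewrite {1}/log2 ln0 // mul0r addr_ge0 // log2_ge0.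
have b0 : (0 < b)%N by case: b h.
have c0 : (0 < c)%N by case: c h; rewrite ?muln0.
rewrite /log2 -mulrDl ler_wpM2r //; first by rewrite invr_ge0 ln_ge0 // ler1n.
rewrite -lnM ?posrE ?ltr0n // -natrM ler_ln ?posrE ?ltr0n ?muln_gt0 ?b0 //.
by rewrite ler_nat.
Qed.
End Log.

Section Conv.
Context {X U : Type}.
Variables (R : realType) (F : X -> U -> set X) (Q : set X) (A : set (set X)) (G : set X -> U).
Hypothesis cov : invariant_cover F Q A G.

Lemma rinv_nat n : exists k : nat, r_inv R F Q A G n = k%:R.
Proof.
have [[S sp]|nsp] := pselect (exists S, spanning F Q A G n S).
  by have [S0 [_ e _]] := rinv_spec R (ex_intro _ S sp); exists (NS S0 n).
exists 0%N; rewrite /r_inv.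
have -> : [set (NS S n)%:R | S in spanning F Q A G n] = set0 :> set R.
  by apply/seteqP; split => // x [S sp _]; apply: nsp; exists S.
exact: inf0.
Qed.

Lemma rinv_submul n m : (0 < n)%N -> (0 < m)%N ->
  log2 (r_inv R F Q A G (n + m)) <= log2 (r_inv R F Q A G n) + log2 (r_inv R F Q A G m).
Proof.
move=> n0 m0.
have [S1 [sp1 -> _]] := rinv_spec R (exists_spanning cov n0).
have [S2 [sp2 -> _]] := rinv_spec R (exists_spanning cov m0).
have [S [sp -> hmin]] := rinv_spec R (exists_spanning cov (ltn_addr m n0)).
apply: (@log2_sub R).
have h1 := catS_span cov n0 m0 sp1 sp2.
have h2 := hmin _ h1.
exact: (leq_trans h2 (catS_ns cov n0 m0 sp1 sp2)).
Qed.

Lemma h_cvg : cvgn (fun n => log2 (r_inv R F Q A G n) / n%:R).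
Proof.
apply: fekete; last exact: rinv_submul.
by move=> n; have [k ->] := rinv_nat n; apply: log2_ge0.
Qed.
End Conv.
Section Atom.
Context {X U : Type}.
Local Open Scope nat_scope.
Variables (F : X -> U -> set X) (Q : set X) (V : set U) (C : set (set X)) (GC : set X -> U).
Hypothesis sys : is_system F.
Hypothesis fQ : finite_set Q.
Hypothesis disj : forall a b, V a -> V b -> a <> b -> Qu F Q a `&` Qu F Q b = set0.
Hypothesis C3 : forall c, ~ V c -> Qu F Q c = set0.
Hypothesis atom : atom_refinement F Q V C GC.

Lemma set1_inj' (x y : X) : [set x] = [set y] -> x = y.
Proof. by move=> e; have : [set y] x by rewrite -e. Qed.

Lemma GC_V x : Q x -> V (GC [set x]) /\ Qu F Q (GC [set x]) x.
Proof. by case: atom => _ h _; apply: h. Qed.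

Lemma C_cover : invariant_cover F Q C GC.
Proof.
case: atom => -> h _; split.
- exact: finite_image.
- by move=> _ [x Qx <-] y ->.
- by move=> x Qx; exists [set x] => //; exists x.
- move=> _ [x Qx <-] z [y -> Fz]; have [_ [_ sub]] := h x Qx; exact: sub.
Qed.

Lemma Qu_V u y : Qu F Q u y -> V u.
Proof. by move=> h; apply/not_notP => nV; rewrite C3 in h. Qed.

Lemma ctrl_eq (A : set (set X)) (G : set X -> U) B x :
  invariant_cover F Q A G -> A B -> B x -> G B = GC [set x].
Proof.
move=> [_ AQ _ FA] AB Bx.
have Qx := AQ _ AB _ Bx.
have hx : Qu F Q (G B) x.
  by split => // z Fz; apply: (FA _ AB); exists x.
have [Va hxa] := GC_V Qx.
apply/not_notP => ne.
have := disj (Qu_V hx) Va ne.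
by move=> /seteqP [/(_ x (conj hx hxa))].
Qed.

End Atom.
Section Traj.
Context {X U : Type}.
Local Open Scope nat_scope.
Variables (F : X -> U -> set X) (Q : set X) (V : set U) (C : set (set X)) (GC : set X -> U).
Hypothesis sys : is_system F.
Hypothesis fQ : finite_set Q.
Hypothesis disj : forall a b, V a -> V b -> a <> b -> Qu F Q a `&` Qu F Q b = set0.
Hypothesis C3 : forall c, ~ V c -> Qu F Q c = set0.
Hypothesis atom : atom_refinement F Q V C GC.

Definition traj n : set (seq (set X)) :=
  [set al | size al = n /\ exists x : nat -> X,
     [/\ forall t, t < n -> nth set0 al t = [set x t], Q (x 0) &
         forall t, t.+1 < n -> F (x t) (GC [set x t]) (x t.+1)]].

Definition nxt (y : X) : X := projT1 (cid (sys y (GC [set y]))).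
Lemma nxtP y : F y (GC [set y]) (nxt y).
Proof. exact: projT2 (cid (sys y (GC [set y]))). Qed.

Lemma traj_Q n (x : nat -> X) : Q (x 0) ->
  (forall t, t.+1 < n -> F (x t) (GC [set x t]) (x t.+1)) ->
  forall t, t < n -> Q (x t).
Proof.
move=> Q0 tr; elim=> // t IH tn.
have [_ [_ sub]] := GC_V atom (IH (ltnW tn)).
exact: sub _ (tr t tn).
Qed.

Lemma mkword_traj n (x : nat -> X) : Q (x 0) ->
  (forall t, t.+1 < n -> F (x t) (GC [set x t]) (x t.+1)) ->
  traj n (mkseq (fun t => [set x t]) n).
Proof.
move=> Q0 tr; split; first by rewrite size_mkseq.
by exists x; split => // t tn; rewrite nth_mkseq.
Qed.

Lemma traj_words n : traj n `<=` words C n.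
Proof.
move=> al [sz [x [hx Q0 tr]]]; split => // t tn.
rewrite hx //; case: atom => -> _ _; exists (x t) => //.
exact: traj_Q tr t tn.
Qed.

Lemma traj_span n : 0 < n -> spanning F Q C GC n (traj n).
Proof.
move=> n0; split.
- exact: traj_words.
- move=> x0 Qx0; exists [set x0] => //.
  rewrite /Pset prednK // ltnn.
  exists (mkseq (fun t => [set iter t nxt x0]) n); split; last by rewrite nth_mkseq.
  apply: mkword_traj => // t _; rewrite iterS; exact: nxtP.
- move=> al [sz [x [hx Q0 tr]]] t tn z.
  rewrite hx ?(ltnW tn) // => -[y -> Fz].
  exists [set z] => //; rewrite /Pset tn.
  pose x' := fun s => if s <= t then x s else iter (s - t.+1) nxt z.
  exists (mkseq (fun s => [set x' s]) n); split; last split.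
  + apply: mkword_traj; first by rewrite /x' leq0n.
    move=> s sn; rewrite /x'.
    case: (ltngtP s t) => [st|ts|->].
    * by apply: tr; lia.
    * by rewrite subSn // iterS; apply: nxtP.
    * by rewrite subnn.
  + apply: (@eq_from_nth _ set0).
      by rewrite !size_take size_mkseq sz tn.
    move=> i; rewrite size_take size_mkseq tn => it.
    rewrite !nth_take // nth_mkseq ?hx; first by rewrite /x' -ltnS it.
      by apply: leq_trans (ltnW tn).
    by apply: leq_trans (ltnW tn).
  + by rewrite nth_mkseq // /x' ltnn subnn.
Qed.
End Traj.
Section Bound.
Context {X U : Type}.
Local Open Scope nat_scope.
Variables (F : X -> U -> set X) (Q : set X) (V : set U) (C : set (set X)) (GC : set X -> U).
Hypothesis sys : is_system F.
Hypothesis fQ : finite_set Q.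
Hypothesis disj : forall a b, V a -> V b -> a <> b -> Qu F Q a `&` Qu F Q b = set0.
Hypothesis C3 : forall c, ~ V c -> Qu F Q c = set0.
Hypothesis atom : atom_refinement F Q V C GC.
Variables (A : set (set X)) (G : set X -> U).
Hypothesis cov : invariant_cover F Q A G.

Lemma card_image_le (T T' : choiceType) (B : set T) (f : T -> T') :
  finite_set B -> #|` fset_set (f @` B)| <= #|` fset_set B|.
Proof. by move=> fB; rewrite fset_set_image //; apply: leq_imfset_card. Qed.

Lemma follow n S (x : nat -> X) : spanning F Q A G n S -> 0 < n -> Q (x 0) ->
  (forall t, t.+1 < n -> F (x t) (GC [set x t]) (x t.+1)) ->
  forall t, t < n -> exists be, S be /\ forall s, s <= t -> nth set0 be s (x s).
Proof.
move=> [W C2 T3] n0 Q0 tr; elim=> [|t IH] tn.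
  have [B PB Bx] := C2 _ Q0; move: PB; rewrite /Pset prednK // ltnn.
  move=> [be [Sbe eB]]; exists be; split => // s; rewrite leqn0 => /eqP ->.
  by rewrite -eB.
have [be [Sbe hbe]] := IH (ltnW tn).
have AB : A (nth set0 be t) by apply: (W _ Sbe).2; apply: ltnW.
have eG := ctrl_eq disj C3 atom cov AB (hbe t (leqnn t)).
have Fy : Fimg F (nth set0 be t) (G (nth set0 be t)) (x t.+1).
  by exists (x t); [apply: hbe | rewrite eG; apply: tr].
have [B PB By] := T3 be Sbe t tn _ Fy.
move: PB; rewrite /Pset tn => -[be' [Sbe' [ht eB]]].
exists be'; split => // s; rewrite leq_eqVlt => /orP [/eqP -> | st].
  by rewrite -eB.
have := congr1 (fun l => nth set0 l s) ht; rewrite /= !nth_take // => ->.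
exact: hbe.
Qed.

Lemma traj_Pset_step n al (x : nat -> X) t :
  (forall s, s < n -> nth set0 al s = [set x s]) -> t.+1 < n ->
  Pset (traj F Q GC n) n al t `<=` [set [set y] | y in F (x t) (GC [set x t])].
Proof.
move=> hx tn; rewrite /Pset tn => B [be [[szb [x' [hx' Q0' tr']]] [ht eB]]].
have e : x' t = x t.
  have e1 : nth set0 be t = nth set0 al t.
    by have := congr1 (fun l => nth set0 l t) ht; rewrite /= !nth_take.
  by apply: set1_inj'; rewrite -(hx' t (ltnW tn)) -(hx t (ltnW tn)).
exists (x' t.+1); first by rewrite -e; apply: tr'.
by rewrite eB hx'.
Qed.


Lemma traj_bound n S : spanning F Q A G n S -> 0 < n ->
  NS (traj F Q GC n) n <= #|` fset_set C| * NS S n.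
Proof.
move=> sp n0; have [W C2 T3] := sp.
have fA : finite_set A by case: cov.
have [_ AQ _ FA] := cov.
have fC : finite_set C by case: (C_cover fQ atom).
apply: (ns_le (traj_words atom (n:=n)) fC).
move=> al [sz [x [hx Q0 tr]]].
have nn : n.-1 < n by rewrite ltn_predL.
have [be [Sbe hbe]] := follow sp n0 Q0 tr nn.
apply: leq_trans (leq_mul (leqnn _) (ns_ge W fA Sbe)).
have fP t : finite_set (Pset S n be t) by apply: sub_finite_set (Pset_words (al:=be) (t:=t) W n0) fA.
have Qx := traj_Q atom Q0 tr.
clear nn; move: sp W C2 T3 al sz hx tr be Sbe hbe fP Qx.
case: n n0 => // n1 _ sp W C2 T3 al sz hx tr be Sbe hbe fP Qx.
rewrite !big_ord_recr /=.
have g1 : 0 < #|` fset_set (Pset S n1.+1 be n1)|.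
  rewrite cardfs_gt0; apply/fset0Pn; exists (nth set0 be 0).
  by rewrite in_fset_set // inE /Pset ltnn; exists be.
have hl : #|` fset_set (Pset (traj F Q GC n1.+1) n1.+1 al n1)| <= #|` fset_set C|.
  exact: (card_sub fC (Pset_words (traj_words atom (n:=n1.+1)) (ltn0Sn n1))).
have hf : forall i : 'I_n1, #|` fset_set (Pset (traj F Q GC n1.+1) n1.+1 al i)| <=
    #|` fset_set (Pset S n1.+1 be i)|.
  move=> [i /= ilt].
  have iS : i.+1 < n1.+1 by [].
  have Qxi : Q (x i) by apply: Qx; apply: ltnW.
  have [Va [_ sub]] := GC_V atom Qxi.
  have fFx : finite_set (F (x i) (GC [set x i])) by apply: sub_finite_set sub fQ.
  apply: leq_trans (card_sub _ (traj_Pset_step hx iS)) _.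
    exact: finite_image.
  have AB : A (nth set0 be i) by apply: (W _ Sbe).2; apply: ltnW.
  have eG := ctrl_eq disj C3 atom cov AB (hbe i (ltnW ilt)).
  set Fx := F (x i) (GC [set x i]).
  have hB : forall B0, exists B, [set [set y] | y in Fx] B0 ->
      Pset S n1.+1 be i B /\ (forall y, Fx y -> B0 = [set y] -> B y).
    move=> B0; have [[y Fy eB0]|nB] := pselect ([set [set y] | y in Fx] B0); last by exists set0.
    have Fy' : Fimg F (nth set0 be i) (G (nth set0 be i)) y.
      by exists (x i); [apply: hbe; apply: ltnW | rewrite eG].
    have [B PB By] := T3 be Sbe i iS y Fy'; exists B => _; split => // y' _ e'.
    by rewrite -(set1_inj' (etrans eB0 e')).
  have [h hh] := choice hB.
  apply: (card_inj (f := h)) => //; first exact: finite_image.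
    move=> B0 B1; rewrite !inE => hB0 hB1 e.
    case: (hB0) => y0 Fy0 e0; case: (hB1) => y1 Fy1 e1.
    have [PB By0] := hh B0 hB0; have [_ By1] := hh B1 hB1.
    have {}By0 := By0 y0 Fy0 (esym e0); have {}By1 := By1 y1 Fy1 (esym e1).
    rewrite -e in By1.
    have AB' : A (h B0) by apply: (Pset_words W (ltn0Sn n1)) PB.
    have QuB w : h B0 w -> Qu F Q (G (h B0)) w.
      move=> hw; split; first by apply: AQ AB' _ hw.
      by move=> v Fv; apply: (FA _ AB'); exists w.
    case: atom => _ _ h3.
    rewrite -e0 -e1; congr [set _].
    apply: (h3 (GC [set x i]) (G (h B0)) (x i) Va (Qu_V C3 (QuB _ By0))).
    - by have [] := GC_V atom Qxi.
    - by split => //; apply: QuB.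
    - by split => //; apply: QuB.
  by move=> _ [B0 hB0 <-]; have [] := hh B0 hB0.
rewrite mulnC; apply: leq_mul => //.
apply: leq_trans (leq_prod (fun i _ => hf i)) _.
exact: leq_pmulr.
Qed.

End Bound.
Lemma cvg_div_n (R : realType) (c : R) : (fun n : nat => c / n%:R) @ \oo --> (0 : R).
Proof.
apply/cvgrPdist_le => e e0.
set N := Num.Def.archi_bound (`|c| / e).
have HN := @archi_boundP _ (`|c| / e) (divr_ge0 (normr_ge0 c) (ltW e0)).
exists N.+1 => // n /= Hn.
have n0R : 0 < n%:R :> R by rewrite ltr0n; apply: leq_ltn_trans Hn.
rewrite sub0r normrN normrM normfV normr_nat ler_pdivrMr //.
have : `|c| / e < n%:R by apply: (lt_trans HN); rewrite ltr_nat; apply: leq_trans Hn.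
by rewrite ltr_pdivrMr // mulrC => /ltW.
Qed.

Section Final.
Context {X U : Type}.
Variables (R : realType) (F : X -> U -> set X) (Q : set X) (V : set U) (C : set (set X)) (GC : set X -> U).
Hypothesis sys : is_system F.
Hypothesis fQ : finite_set Q.
Hypothesis disj : forall a b, V a -> V b -> a <> b -> Qu F Q a `&` Qu F Q b = set0.
Hypothesis C3 : forall c, ~ V c -> Qu F Q c = set0.
Hypothesis atom : atom_refinement F Q V C GC.

Lemma lb_h A G : invariant_cover F Q A G -> h_inv R F Q C GC <= h_inv R F Q A G.
Proof.
move=> cov.
have covC := C_cover fQ atom.
set sC := fun n : nat => log2 (r_inv R F Q C GC n) / n%:R.
set sA := fun n : nat => log2 (r_inv R F Q A G n) / n%:R.
set c := log2 ((#|` fset_set C|)%:R : R).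
have cC : cvgn sC := h_cvg (R:=R) covC.
have cA : cvgn sA := h_cvg (R:=R) cov.
have key : forall n, (0 < n)%N -> sC n <= sA n + c / n%:R.
  move=> n n0.
  have [S0 [sp0 e0 min0]] := rinv_spec R (exists_spanning covC n0).
  have [S1 [sp1 e1 _]] := rinv_spec R (exists_spanning cov n0).
  have h : (NS S0 n <= #|` fset_set C| * NS S1 n)%N.
    apply: leq_trans (min0 _ (traj_span sys atom n0)) _.
    exact: (traj_bound fQ disj C3 atom cov sp1 n0).
  have := @log2_sub R _ _ _ h.
  rewrite /sC /sA e0 e1 => hl.
  rewrite -mulrDl ler_wpM2r // ?invr_ge0 ?ler0n //.
  by rewrite addrC.
have cg : (fun n => sA n + c / n%:R) @ \oo --> limn sA + 0.
  exact: (cvgD cA (cvg_div_n c)).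
rewrite /h_inv -/sC -/sA.
have le : limn sC <= limn (fun n => sA n + c / n%:R).
  apply: ler_lim => //; first by apply/cvg_ex; eexists; exact: cg.
  by exists 1%N => // n /= n1; apply: key.
by move: le; rewrite (cvg_lim _ cg) ?addr0.
Qed.

End Final.

Theorem theorem3p13 (R : realType) (X U : Type) (F : X -> U -> set X)
  (Q : set X) (V : set U) (C : set (set X)) (GC : set X -> U) :
  inhabited X -> inhabited U -> is_system F ->
  controlled_invariant F Q -> finite_set Q ->
  finite_set V -> is_cover F Q V ->
  (forall a b, V a -> V b -> a <> b -> Qu F Q a `&` Qu F Q b = set0) ->
  (forall a b, V a -> V b -> Mab F Q a b ->
     exists K, K `<=` Qu F Q a /\ Qu F Q b `<=` Fimg F K a) ->
  (forall c, ~ V c -> Qu F Q c = set0) ->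
  atom_refinement F Q V C GC ->
  h_fb_inv R F Q = h_inv R F Q C GC.
Proof.
move=> _ _ sys _ fQ _ _ disj _ C3 atom.
rewrite /h_fb_inv; apply: inf_min.
  by exists (C, GC) => //; exact: C_cover fQ atom.
move=> _ [[A G] cov <-] /=.
exact: (lb_h R sys fQ disj C3 atom cov).
Qed.
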